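(* Fix finite alphabets $\mathcal{X},\mathcal{Y},\mathcal{Z}$. The map sending a joint distribution $\mathcal{D}_{X,Y,Z}$ on $\mathcal{X}\times\mathcal{Y}\times\mathcal{Z}$ (an element of the probability simplex in $\mathbb{R}^{|\mathcal{X}|\times|\mathcal{Y}|\times|\mathcal{Z}|}$, with the Euclidean topology) to $\operatorname{Red}(X,Y\to Z)\in\mathbb{R}$ is continuous, where $\operatorname{Red}$ is the redundant information defined below.
   Context: For $(X,Y,Z)$ with joint distribution $\mathcal{D}_{X,Y,Z}$ and each $y\in\mathcal{Y}$ with $\Pr(Y=y)>0$, let $(A_y,B_y,C_y)$ be the random triple on $\mathcal{X}\times\mathcal{Y}\times\mathcal{Z}$ with $\Pr(A_y=x,B_y=y',C_y=z)=0$ if $\Pr(Z=z)=0$ and $\Pr(A_y=x,B_y=y',C_y=z)=\Pr(X=x,Y=y',Z=z)\Pr(Z=z\mid Y=y)/\Pr(Z=z)$ otherwise. The unique information is $\operatorname{Un}(X\to Z\mid Y)=\sum_{y:\Pr(Y=y)>0}\Pr(Y=y)\,I(A_y;C_y)$ and the redundant information is $\operatorname{Red}(X,Y\to Z)=I(X;Z)-\operatorname{Un}(X\to Z\mid Y)$, where $I$ is mutual information. *)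

(* Defs.v *)
From mathcomp Require Import all_boot all_order all_algebra.
From mathcomp Require Import reals exp.
Set Implicit Arguments. Unset Strict Implicit. Unset Printing Implicit Defensive.
Import Order.TTheory GRing.Theory Num.Theory.
Local Open Scope ring_scope.

Section Defs.
Variables (R : realType) (X Y Z : finType).

Definition is_dist (p : X -> Y -> Z -> R) : Prop :=
  (forall x y z, 0 <= p x y z) /\ \sum_x \sum_y \sum_z p x y z = 1.

Definition mutinf (r : X -> Z -> R) : R :=
  \sum_x \sum_z
    (if r x z == 0 then 0
     else r x z * ln (r x z / ((\sum_z' r x z') * (\sum_x' r x' z)))).

Definition pY (p : X -> Y -> Z -> R) (y : Y) : R := \sum_x \sum_z p x y z.
Definition pZ (p : X -> Y -> Z -> R) (z : Z) : R := \sum_x \sum_y p x y z.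
Definition pYZ (p : X -> Y -> Z -> R) (y : Y) (z : Z) : R := \sum_x p x y z.

Definition tilt (p : X -> Y -> Z -> R) (y : Y) : X -> Y -> Z -> R :=
  fun x y' z => if pZ p z == 0 then 0
                else p x y' z * (pYZ p y z / pY p y) / pZ p z.

Definition IAC (p : X -> Y -> Z -> R) (y : Y) : R :=
  mutinf (fun x z => \sum_y' tilt p y x y' z).

Definition Un (p : X -> Y -> Z -> R) : R :=
  \sum_(y | pY p y != 0) pY p y * IAC p y.

Definition Red (p : X -> Y -> Z -> R) : R :=
  mutinf (fun x z => \sum_y p x y z) - Un p.

End Defs.

(* Main.v *)
Require Import Defs.
From mathcomp Require Import all_boot all_order all_algebra.
From mathcomp Require Import reals exp.
From mathcomp Require Import boolp classical_sets topology normedtype sequences.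
From mathcomp Require Import ring lra.
Import Order.TTheory GRing.Theory Num.Theory.
Import numFieldNormedType.Exports.
Local Open Scope ring_scope.



Section Cont.
Variable R : realType.
Definition ccont (f : R -> R) (a : R) := forall e : R, 0 < e ->
  exists2 d : R, 0 < d & forall b, `|a - b| < d -> `|f a - f b| < e.

Lemma ccontP f a : {for a, continuous f} -> ccont f a.
Proof.
move=> H e e0.
have := @cvgr_dist_lt _ _ _ _ _ f (f a) H e e0.
by move=> H1; have [d d0 Hd] := (nbhs_ballP _ _).1 (H1 _); exists d => // b ab.
Qed.

Definition phi (t : R) := t * ln t.

Lemma phi0 : phi 0 = 0. Proof. by rewrite /phi mul0r. Qed.

Lemma ccont_phi0 : ccont phi 0.
Proof.
move=> e e0; exists (expR (- (2 / e))); first exact: expR_gt0.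
move=> b hb; rewrite phi0 sub0r normrN; move: hb; rewrite sub0r normrN.
have [b0|b0] := leP b 0.
  by move=> _; rewrite /phi ln0 // mulr0 normr0.
rewrite gtr0_norm // => hb.
have lb : ln b < - (2 / e).
  by rewrite -ltr_expR lnK ?posrE.
set v := - ln b.
have hv : 2 / e < v by rewrite /v ltrNr.
have v0 : 0 < v by apply: lt_trans hv; rewrite divr_gt0.
have ev : 2 < e * v by move: hv; rewrite ltr_pdivrMr // mulrC.
have bE : b = (expR v)^-1 by rewrite -expRN /v opprK lnK ?posrE.
have hE := @expR_ge1Dxn R v 1 (ltW v0).
have Epos : 0 < expR v := expR_gt0 v.
have phiE : phi b = - (v * (expR v)^-1) by rewrite /phi -/v -[ln b]opprK -/v {1}bE mulrN mulrC.
rewrite phiE normrN ger0_norm; last by rewrite mulr_ge0 // ?invr_ge0 ltW.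
rewrite ltr_pdivrMr //.
move: hE; rewrite (_ : 2`!%:R = 2) // expr2 => hE.
have h1 : v * v <= 2 * expR v by lra.
nra.
Qed.

Variables (X Y Z : finType).
Local Notation T := (X -> Y -> Z -> R).
Definition nonneg (q : T) := forall x y z, 0 <= q x y z.
Variable p : T.
Definition cont (F : T -> R) := forall e : R, 0 < e -> exists2 d : R, 0 < d &
  forall q, nonneg q -> (forall x y z, `|p x y z - q x y z| < d) -> `|F p - F q| < e.

Lemma cont_cst c : cont (fun _ => c).
Proof. by move=> e e0; exists 1 => // q _ _; rewrite subrr normr0. Qed.

Lemma cont_coord x y z : cont (fun q => q x y z).
Proof. by move=> e e0; exists e => // q _ /(_ x y z). Qed.

Lemma cont_add F G : cont F -> cont G -> cont (fun q => F q + G q).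
Proof.
move=> hF hG e e0.
have e20 : 0 < e / 2 by rewrite divr_gt0.
have [d1 d10 H1] := hF _ e20; have [d2 d20 H2] := hG _ e20.
exists (Num.min d1 d2); first by rewrite lt_min d10 d20.
move=> q qn hq.
have h1 : `|F p - F q| < e / 2.
  by apply: H1 => // x y z; have := hq x y z; rewrite lt_min => /andP[].
have h2 : `|G p - G q| < e / 2.
  by apply: H2 => // x y z; have := hq x y z; rewrite lt_min => /andP[].
rewrite opprD addrACA (splitr e).
exact: le_lt_trans (ler_normD _ _) (ltrD h1 h2).
Qed.

Lemma cont_comp f F : cont F -> ccont f (F p) -> cont (fun q => f (F q)).
Proof.
move=> hF hf e e0; have [d1 d10 H1] := hf _ e0; have [d d0 H] := hF _ d10.
by exists d => // q qn hq; apply: H1; apply: H.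
Qed.

Lemma cont_sum (I : Type) (r : seq I) (F : I -> T -> R) :
  (forall i, cont (F i)) -> cont (fun q => \sum_(i <- r) F i q).
Proof.
move=> hF; elim: r => [|i r IH].
  under [X in cont X]funext do rewrite big_nil. exact: cont_cst.
under [X in cont X]funext do rewrite big_cons. exact: cont_add.
Qed.

Lemma cont_opp F : cont F -> cont (fun q => - F q).
Proof.
move=> hF; refine (cont_comp (fun t => - t) _ hF _) => e e0.
by exists e => // b; rewrite -opprD normrN.
Qed.

Lemma cont_sub F G : cont F -> cont G -> cont (fun q => F q - G q).
Proof. by move=> hF hG; apply: cont_add => //; exact: cont_opp. Qed.

Lemma cont_sq F : cont F -> cont (fun q => F q * F q).
Proof.
move=> hF; apply: (cont_comp (fun t => t * t) _ hF).
apply: ccontP; apply: (@continuousM _ _ id id); exact: cvg_id.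
Qed.

Lemma cont_scale c F : cont F -> cont (fun q => c * F q).
Proof.
move=> hF; apply: (cont_comp (fun t => c * t) _ hF).
apply: ccontP; apply: (@continuousM _ _ (fun=> c) id); [exact: cvg_cst|exact: cvg_id].
Qed.

Lemma cont_mul F G : cont F -> cont G -> cont (fun q => F q * G q).
Proof.
move=> hF hG.
have H := cont_scale (4^-1) _ (cont_sub _ _ (cont_sq _ (cont_add _ _ hF hG)) (cont_sq _ (cont_sub _ _ hF hG))).
have Eq1 : (fun q => 4^-1 * ((F q + G q) * (F q + G q) - (F q - G q) * (F q - G q)))
   = (fun q => F q * G q).
  by apply: funext => q; field.
by rewrite -Eq1.
Qed.

Lemma cont_inv F : F p != 0 -> cont F -> cont (fun q => (F q)^-1).
Proof.
move=> h hF; apply: (cont_comp GRing.inv _ hF).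
apply: ccontP; exact: inv_continuous.
Qed.

Lemma cont_phi F : 0 <= F p -> cont F -> cont (fun q => phi (F q)).
Proof.
rewrite le_eqVlt => /orP [/eqP h|h] hF.
  by apply: (cont_comp phi _ hF); rewrite -h; exact: ccont_phi0.
apply: cont_mul => //; apply: (cont_comp (@ln R) _ hF).
apply: ccontP; exact: continuous_ln.
Qed.

Lemma cont_squeeze F G : cont G -> G p = 0 -> F p = 0 ->
  (forall q, nonneg q -> `|F q| <= `|G q|) -> cont F.
Proof.
move=> hG G0 F0 hle e e0; have [d d0 H] := hG _ e0.
exists d => // q qn hq; have := H q qn hq.
by rewrite G0 F0 !sub0r !normrN; apply: le_lt_trans; apply: hle.
Qed.

End Cont.
Arguments phi {R}.
Arguments nonneg {R X Y Z}.
Arguments cont {R X Y Z}.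



Section Alg.
Variables (R : realType) (X Y Z : finType).

Lemma sum_ge_term (I : finType) (F : I -> R) j :
  (forall i, 0 <= F i) -> F j <= \sum_i F i.
Proof. by move=> h; rewrite (bigD1 j) //= lerDl sumr_ge0. Qed.

Lemma mutinf_phi (r : X -> Z -> R) : (forall x z, 0 <= r x z) ->
  mutinf r = \sum_x \sum_z phi (r x z) - \sum_x phi (\sum_z r x z)
             - \sum_z phi (\sum_x r x z).
Proof.
move=> hr; rewrite /mutinf.
have step : forall x z, (if r x z == 0 then 0 else
   r x z * @ln R (r x z / ((\sum_z' r x z') * (\sum_x' r x' z)))) =
   phi (r x z) - r x z * @ln R (\sum_z' r x z') - r x z * @ln R (\sum_x' r x' z).
  move=> x z; have [->|h] := eqVneq (r x z) 0; first by rewrite phi0 !mul0r !subr0.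
  have rp : 0 < r x z by rewrite lt_def h hr.
  have ap : 0 < \sum_z' r x z'.
    by apply: (lt_le_trans rp); apply: (sum_ge_term _ (fun z' => r x z')) => i.
  have bp : 0 < \sum_x' r x' z.
    by apply: (lt_le_trans rp); apply: (sum_ge_term _ (fun x' => r x' z)) => i.
  rewrite ln_div ?posrE ?mulr_gt0 // lnM ?posrE // /phi; ring.
rewrite (eq_bigr _ (fun x _ => eq_bigr _ (fun z _ => step x z))).
under eq_bigr => x _ do rewrite !sumrB.
rewrite !sumrB; congr (_ - _ - _).
  by apply: eq_bigr => x _; rewrite -mulr_suml.
by rewrite exchange_big; apply: eq_bigr => z _; rewrite -mulr_suml.
Qed.

Lemma phi_scale (w a : R) : 0 < w -> 0 <= a -> w * phi (a / w) = phi a - a * ln w.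
Proof.
move=> w0; rewrite le_eqVlt => /orP [/eqP <-|a0].
  by rewrite mul0r phi0 mulr0 mul0r subr0.
by rewrite /phi ln_div ?posrE // mulrA [w * _]mulrC divfK ?gt_eqF // mulrBr.
Qed.

Lemma sum_phi_scale (I : Type) (s : seq I) (f : I -> R) (w : R) :
  (forall i, 0 <= f i) -> 0 < w ->
  w * \sum_(i <- s) phi (f i / w) = \sum_(i <- s) phi (f i) - (\sum_(i <- s) f i) * ln w.
Proof.
move=> hf w0; rewrite mulr_sumr (eq_bigr _ (fun i _ => phi_scale w (f i) w0 (hf i))).
by rewrite sumrB mulr_suml.
Qed.
End Alg.



Section Alg2.
Variables (R : realType) (X Y Z : finType).
Local Notation T := (X -> Y -> Z -> R).

Definition pXZ (q : T) x z := \sum_y q x y z.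
Definition Tt (q : T) y x z := pXZ q x z * pYZ q y z / pZ q z.
Definition Gy (q : T) y := \sum_x \sum_z phi (Tt q y x z) - \sum_x phi (\sum_z Tt q y x z)
   - \sum_z phi (pYZ q y z) + phi (pY q y).
Definition Fml (q : T) := (\sum_x \sum_z phi (pXZ q x z) - \sum_x phi (\sum_z pXZ q x z)
   - \sum_z phi (\sum_x pXZ q x z)) - \sum_y Gy q y.

Variable q : T.
Hypothesis qn : nonneg q.

Lemma pXZ_ge0 x z : 0 <= pXZ q x z. Proof. exact: sumr_ge0. Qed.
Lemma pYZ_ge0 y z : 0 <= pYZ q y z. Proof. exact: sumr_ge0. Qed.
Lemma pZ_ge0 z : 0 <= pZ q z. Proof. by apply: sumr_ge0 => x _; exact: sumr_ge0. Qed.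
Lemma pY_ge0 y : 0 <= pY q y. Proof. by apply: sumr_ge0 => x _; exact: sumr_ge0. Qed.

Lemma pYZ_le_pZ y z : pYZ q y z <= pZ q z.
Proof.
rewrite /pYZ /pZ; apply: ler_sum => x _.
by apply: (sum_ge_term _ _ (fun y => q x y z)) => i; exact: qn.
Qed.

Lemma pXZ_le_pZ x z : pXZ q x z <= pZ q z.
Proof. by rewrite /pZ; apply: (sum_ge_term _ _ (fun x => pXZ q x z)) => i; exact: pXZ_ge0. Qed.

Lemma Tt_ge0 y x z : 0 <= Tt q y x z.
Proof. by rewrite /Tt divr_ge0 ?mulr_ge0 ?pXZ_ge0 ?pYZ_ge0 ?pZ_ge0. Qed.

Lemma Tt_sumx y z : \sum_x Tt q y x z = pYZ q y z.
Proof.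
rewrite /Tt -!mulr_suml.
have -> : \sum_x pXZ q x z = pZ q z by [].
have [h|h] := eqVneq (pZ q z) 0.
  have : pYZ q y z = 0 by apply: le_anti; rewrite pYZ_ge0 -h pYZ_le_pZ.
  by move=> ->; rewrite h !mul0r.
by rewrite mulrAC divff // mul1r.
Qed.

Lemma sumz_pYZ y : \sum_z pYZ q y z = pY q y.
Proof. by rewrite /pYZ /pY exchange_big. Qed.

Lemma sumTt y : \sum_x \sum_z Tt q y x z = pY q y.
Proof. by rewrite exchange_big -sumz_pYZ; apply: eq_bigr => z _; rewrite Tt_sumx. Qed.

Lemma s_eq y x z : pY q y != 0 ->
  \sum_y' tilt q y x y' z = Tt q y x z / pY q y.
Proof.
move=> hy; rewrite /tilt /Tt.
have [h|h] := eqVneq (pZ q z) 0.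
  by rewrite big1 // h invr0 !mulr0 mul0r.
rewrite -!mulr_suml; rewrite /pXZ; field.
by rewrite hy h.
Qed.


Lemma Un_term y : pY q y != 0 -> pY q y * IAC q y = Gy q y.
Proof.
move=> hy.
have w0 : 0 < pY q y by rewrite lt_def hy pY_ge0.
set w := pY q y.
rewrite /IAC.
have -> : (fun x z => \sum_y' tilt q y x y' z) = (fun x z => Tt q y x z / w).
  by apply: funext => x; apply: funext => z; rewrite s_eq.
rewrite mutinf_phi; last by move=> x z; rewrite divr_ge0 ?Tt_ge0 // ltW.
have e1 : forall x, \sum_z Tt q y x z / w = (\sum_z Tt q y x z) / w.
  by move=> x; rewrite mulr_suml.
have e2 : forall z, \sum_x Tt q y x z / w = pYZ q y z / w.
  by move=> z; rewrite -mulr_suml Tt_sumx.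
rewrite (eq_bigr _ (fun x _ => congr1 phi (e1 x))).
rewrite (eq_bigr _ (fun z _ => congr1 phi (e2 z))).
have hA : w * \sum_x \sum_z phi (Tt q y x z / w) = \sum_x \sum_z phi (Tt q y x z) - w * ln w.
  rewrite mulr_sumr.
  rewrite (eq_bigr _ (fun x _ => sum_phi_scale _ _ _ (fun z => Tt q y x z) w (fun z => Tt_ge0 y x z) w0)).
  by rewrite sumrB -mulr_suml sumTt mulrC.
have hB : w * \sum_x phi ((\sum_z Tt q y x z) / w) = \sum_x phi (\sum_z Tt q y x z) - w * ln w.
  rewrite (sum_phi_scale _ _ _ (fun x => \sum_z Tt q y x z)) ?sumTt 1?mulrC //.
  by move=> x; apply: sumr_ge0 => z _; exact: Tt_ge0.
have hC : w * \sum_z phi (pYZ q y z / w) = \sum_z phi (pYZ q y z) - w * ln w.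
  rewrite (sum_phi_scale _ _ _ (fun z => pYZ q y z)) ?sumz_pYZ 1?mulrC //.
  by move=> z; exact: pYZ_ge0.
rewrite !mulrBr hA hB hC /Gy -/w /phi; ring.
Qed.

Lemma Un_eq : Un q = \sum_y Gy q y.
Proof.
rewrite /Un big_mkcond; apply: eq_bigr => y _.
case: ifPn => [hy|]; first exact: Un_term.
rewrite negbK => /eqP hy.
have hz : forall z, pYZ q y z = 0.
  move=> z; move/eqP: hy; rewrite -sumz_pYZ psumr_eq0; last by move=> i _; exact: pYZ_ge0.
  by move/allP => /(_ z (mem_index_enum z)) /implyP /(_ isT) /eqP.
have ht : forall x z, Tt q y x z = 0 by move=> x z; rewrite /Tt hz mulr0 mul0r.
rewrite /Gy hy phi0 addr0.
rewrite big1 ?big1 ?sub0r ?subr0 ?oppr0 //.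
- by move=> z _; rewrite hz phi0.
- by move=> x _; rewrite big1 ?phi0 // => z _; rewrite ht.
- by move=> x _; rewrite big1 // => z _; rewrite ht phi0.
Qed.

Lemma Red_Fml : Red q = Fml q.
Proof.
by rewrite /Red /Fml mutinf_phi ?Un_eq // => x z; exact: pXZ_ge0.
Qed.

End Alg2.
Arguments pXZ {R X Y Z}.
Arguments Tt {R X Y Z}.
Arguments Gy {R X Y Z}.
Arguments Fml {R X Y Z}.



Section Cont2.
Variables (R : realType) (X Y Z : finType).
Local Notation T := (X -> Y -> Z -> R).
Variable p : T.
Hypothesis pn : nonneg p.

Lemma cont_pXZ x z : cont p (fun q : T => pXZ q x z).
Proof. by rewrite /pXZ; apply: cont_sum => y; exact: cont_coord. Qed.

Lemma cont_pYZ y z : cont p (fun q : T => pYZ q y z).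
Proof. by rewrite /pYZ; apply: cont_sum => x; exact: cont_coord. Qed.

Lemma cont_pZ z : cont p (fun q : T => pZ q z).
Proof. by rewrite /pZ; apply: cont_sum => x; apply: cont_sum => y; exact: cont_coord. Qed.

Lemma cont_pY y : cont p (fun q : T => pY q y).
Proof. by rewrite /pY; apply: cont_sum => x; apply: cont_sum => z; exact: cont_coord. Qed.

Lemma cont_Tt y x z : cont p (fun q : T => Tt q y x z).
Proof.
have [h|h] := eqVneq (pZ p z) 0.
  apply: (cont_squeeze _ _ _ _ _ _ _ (cont_pYZ y z)).
  - by apply: le_anti; rewrite (@pYZ_ge0 _ _ _ _ _ pn) -h (@pYZ_le_pZ _ _ _ _ _ pn).
  - by rewrite /Tt h invr0 mulr0.
  move=> q qn; rewrite !ger0_norm ?(@pYZ_ge0 _ _ _ _ _ qn) ?(@Tt_ge0 _ _ _ _ _ qn) //.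
  rewrite /Tt; have [h'|h'] := eqVneq (pZ q z) 0.
    by rewrite h' invr0 mulr0 (@pYZ_ge0 _ _ _ _ _ qn).
  have zp : 0 < pZ q z by rewrite lt_def h' (@pZ_ge0 _ _ _ _ _ qn).
  rewrite ler_pdivrMr // mulrC.
  apply: ler_wpM2l; first exact: (@pYZ_ge0 _ _ _ _ _ qn).
  exact: (@pXZ_le_pZ _ _ _ _ _ qn).
rewrite /Tt; apply: cont_mul; last exact: (cont_inv _ _ _ _ _ _ h (cont_pZ z)).
apply: cont_mul; [exact: cont_pXZ | exact: cont_pYZ].
Qed.

Lemma cont_Fml : cont p (@Fml R X Y Z).
Proof.
rewrite /Fml /Gy.
repeat first [ exact: cont_Tt | exact: cont_pXZ | exact: cont_pYZ | exact: cont_pY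
  | exact: (@pXZ_ge0 _ _ _ _ _ pn) | exact: (@pYZ_ge0 _ _ _ _ _ pn)
  | exact: (@pY_ge0 _ _ _ _ _ pn) | exact: (@Tt_ge0 _ _ _ _ _ pn)
  | apply: sumr_ge0 => ? _
  | apply: cont_sub | apply: cont_add | apply: cont_sum => ? | apply: cont_phi ].
Qed.
End Cont2.

Theorem lemma9 (R : realType) (X Y Z : finType) (p : X -> Y -> Z -> R) :
  is_dist p ->
  forall eps : R, 0 < eps ->
  exists2 delta : R, 0 < delta &
    forall q : X -> Y -> Z -> R, is_dist q ->
      (forall x y z, `|p x y z - q x y z| < delta) ->
      `|Red p - Red q| < eps.
Proof.
move=> [pn _] eps e0.
have [d d0 H] := cont_Fml _ _ _ _ _ pn eps e0.
exists d => // q [qn _] hq.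
rewrite (Red_Fml _ _ _ _ _ pn) (Red_Fml _ _ _ _ _ qn); exact: H.
Qed.
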